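(* Consider a floating-base serial chain of $N$ rigid bodies, as described in the context, in the absence of gravity. For $i=2,\ldots,N$ define the inertia-transfer subspace $$\mathcal{T}_i=\Big\{\delta\boldsymbol{\pi}\in\mathbb{R}^{10N}:\ \delta\mathbf{I}_{i-1}=-\big({}^{J_i}\mathbf{X}_{i-1}\big)^{\top}\delta\mathbf{I}_i\,{}^{J_i}\mathbf{X}_{i-1},\ \ \boldsymbol{\Phi}_i^{\top}\delta\mathbf{I}_i=\mathbf{0},\ \ (\boldsymbol{\Phi}_i\times)^{\top}\delta\mathbf{I}_i+\delta\mathbf{I}_i(\boldsymbol{\Phi}_i\times)=\mathbf{0},\ \ \delta\mathbf{I}_j=\mathbf{0}\text{ for } j\notin\{i,i-1\}\Big\},$$ where $\delta\mathbf{I}_j=[\delta\boldsymbol{\pi}_j]^{\wedge}$. Then the parameter nullspace satisfies $$\mathcal{N}=\bigoplus_{i=2}^{N}\mathcal{T}_i,$$ the direct sum of vector subspaces.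
   Context: Spatial notation. For $\mathbf{x}\in\mathbb{R}^3$, $\mathbf{S}(\mathbf{x})$ is the skew-symmetric matrix with $\mathbf{S}(\mathbf{x})\mathbf{y}=\mathbf{x}\times\mathbf{y}$. For a spatial vector $\mathbf{v}=[\boldsymbol{\omega};\mathbf{u}]\in\mathbb{R}^6$ ($\boldsymbol\omega,\mathbf u\in\mathbb R^3$), the spatial cross-product matrix is $(\mathbf{v}\times)=\begin{bmatrix}\mathbf{S}(\boldsymbol{\omega})&\mathbf{0}\\ \mathbf{S}(\mathbf{u})&\mathbf{S}(\boldsymbol{\omega})\end{bmatrix}\in\mathbb{R}^{6\times6}$. A spatial transform is a matrix $\begin{bmatrix}\mathbf{R}&\mathbf{0}\\-\mathbf{R}\mathbf{S}(\mathbf{p})&\mathbf{R}\end{bmatrix}$ with $\mathbf{R}\in SO(3)$, $\mathbf{p}\in\mathbb{R}^3$. The inertial parameters of a body are $\boldsymbol{\pi}=[m,h_x,h_y,h_z,I_{xx},I_{xy},I_{xz},I_{yy},I_{yz},I_{zz}]^\top\in\mathbb{R}^{10}$, and the (linear) map $[\cdot]^{\wedge}$ sends $\boldsymbol\pi$ to the spatial inertia $[\boldsymbol{\pi}]^{\wedge}=\begin{bmatrix}\bar{\mathbf{I}}&\mathbf{S}(\mathbf{h})\\ \mathbf{S}(\mathbf{h})^{\top}&m\mathbf{1}_3\end{bmatrix}$ with $\mathbf{h}=[h_x,h_y,h_z]^\top$ and $\bar{\mathbf{I}}$ the symmetric $3\times3$ matrix with entries $I_{xx},I_{xy},\ldots$;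 $[\cdot]^{\vee}$ is its inverse on the 10-dimensional space of such matrices. Floating-base chain. Bodies are numbered $1,\ldots,N$; body 1 (the floating base) has spatial velocity $\mathbf{v}_1\in\mathbb{R}^6$ that may take any value. For $i=2,\ldots,N$, joint $i$ is a single-DoF joint with coordinate $q_i\in\mathbb{R}$ connecting body $i-1$ to body $i$, with $\mathbf{v}_i={}^{i}\mathbf{X}_{i-1}(q_i)\mathbf{v}_{i-1}+\boldsymbol{\Phi}_i\dot q_i$, where $\boldsymbol{\Phi}_i\in\mathbb{R}^6$ is a fixed joint free-mode vector, ${}^{i}\mathbf{X}_{i-1}(q_i)={}^{i}\mathbf{X}_{J_i}(q_i)\,{}^{J_i}\mathbf{X}_{i-1}$, ${}^{J_i}\mathbf{X}_{i-1}$ is a constant spatial transform, and ${}^{i}\mathbf{X}_{J_i}(q_i)$ is a spatial transform with ${}^{i}\mathbf{X}_{J_i}(0)=\mathbf{1}_6$ and $\frac{d}{dq_i}{}^{i}\mathbf{X}_{J_i}(q_i)=-(\boldsymbol{\Phi}_i\times)\,{}^{i}\mathbf{X}_{J_i}(q_i)$. The full parameter vector is $\boldsymbol{\pi}=[\boldsymbol{\pi}_1^\top,\ldots,\boldsymbol{\pi}_N^\top]^\top\in\mathbb{R}^{10N}$, and the kinetic energy is $T=\frac12\sum_{j}\mathbf{v}_j^\top[\boldsymbol{\pi}_j]^{\wedge}\mathbf{v}_j$. The parameter nullspace $\mathcal{N}$ is the set of $\delta\boldsymbol{\pi}\in\mathbb{R}^{10N}$ such that $\sum_{j=1}^N\mathbf{v}_j^\top[\delta\boldsymbol{\pi}_j]^{\wedge}\mathbf{v}_j=0$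 for all $\mathbf{v}_1\in\mathbb{R}^6$ and all $q_i,\dot q_i$ ($i\ge2$); equivalently, the set of parameter changes leaving the mass matrix (and hence the gravity-free inverse dynamics, i.e. the regressor output $\mathbf Y(\mathbf q,\dot{\mathbf q},\ddot{\mathbf q})\delta\boldsymbol\pi$) unchanged for all states. *)

(* Defs.v *)
(* Vectors and matrices are represented as functions on nat; only the
   entries with indices below the stated dimension are meaningful. *)
From Stdlib Require Import Reals.
Open Scope R_scope.

Fixpoint sumR (n : nat) (f : nat -> R) : R :=
  match n with
  | O => 0
  | S n' => sumR n' f + f n'
  end.

Definition vec := nat -> R.
Definition mat := nat -> nat -> R.

Definition mmul (n : nat) (A B : mat) : mat :=
  fun i j => sumR n (fun k => A i k * B k j).
Definition mvmul (n : nat) (A : mat) (x : vec) : vec :=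
  fun i => sumR n (fun k => A i k * x k).
Definition mtr (A : mat) : mat := fun i j => A j i.
Definition madd (A B : mat) : mat := fun i j => A i j + B i j.
Definition mopp (A : mat) : mat := fun i j => - A i j.
Definition mscal (c : R) (A : mat) : mat := fun i j => c * A i j.
Definition mzero : mat := fun _ _ => 0.
Definition ident : mat := fun i j => if Nat.eqb i j then 1 else 0.
Definition dot (n : nat) (x y : vec) : R := sumR n (fun k => x k * y k).

Definition meq (n m : nat) (A B : mat) : Prop :=
  forall i j, (i < n)%nat -> (j < m)%nat -> A i j = B i j.

Definition block (A B C D : mat) : mat :=
  fun i j =>
    if Nat.ltb i 3 then
      (if Nat.ltb j 3 then A i j else if Nat.ltb j 6 then B i (j - 3)%nat else 0)
    else if Nat.ltb i 6 then
      (if Nat.ltb j 3 then C (i - 3)%nat j else if Nat.ltb j 6 then D (i - 3)%nat (j - 3)%nat else 0)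
    else 0.

Definition skew (x : vec) : mat :=
  fun i j =>
    match i, j with
    | O, 1%nat => - x 2%nat | O, 2%nat => x 1%nat
    | 1%nat, O => x 2%nat   | 1%nat, 2%nat => - x 0%nat
    | 2%nat, O => - x 1%nat | 2%nat, 1%nat => x 0%nat
    | _, _ => 0%R
    end.

(* spatial vector v = [omega; u]: omega = v 0..2, u = v 3..5 *)
Definition ang (v : vec) : vec := fun k => v k.
Definition lin (v : vec) : vec := fun k => v (k + 3)%nat.

Definition scross (v : vec) : mat :=
  block (skew (ang v)) mzero (skew (lin v)) (skew (ang v)).

Definition det3 (A : mat) : R :=
  A 0%nat 0%nat * (A 1%nat 1%nat * A 2%nat 2%nat - A 1%nat 2%nat * A 2%nat 1%nat)
  - A 0%nat 1%nat * (A 1%nat 0%nat * A 2%nat 2%nat - A 1%nat 2%nat * A 2%nat 0%nat)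
  + A 0%nat 2%nat * (A 1%nat 0%nat * A 2%nat 1%nat - A 1%nat 1%nat * A 2%nat 0%nat).

Definition is_rotation (Rm : mat) : Prop :=
  meq 3 3 (mmul 3 (mtr Rm) Rm) ident /\ det3 Rm = 1.

Definition is_spatial_transform (X : mat) : Prop :=
  exists (Rm : mat) (p : vec),
    is_rotation Rm /\
    meq 6 6 X (block Rm mzero (mopp (mmul 3 Rm (skew p))) Rm).

(* inertial parameters pi = [m,hx,hy,hz,Ixx,Ixy,Ixz,Iyy,Iyz,Izz] (indices 0..9) *)
Definition Ibar (p : vec) : mat :=
  fun i j =>
    match i, j with
    | 0, 0 => p 4%nat | 0, 1 => p 5%nat | 0, 2 => p 6%nat
    | 1, 0 => p 5%nat | 1, 1 => p 7%nat | 1, 2 => p 8%nat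
    | 2, 0 => p 6%nat | 2, 1 => p 8%nat | 2, 2 => p 9%nat
    | _, _ => 0%R
    end.
Definition hvec (p : vec) : vec := fun k => p (S k).

Definition hat (p : vec) : mat :=
  block (Ibar p) (skew (hvec p)) (mtr (skew (hvec p))) (mscal (p 0%nat) ident).

Definition quad6 (v : vec) (M : mat) : R := dot 6 v (mvmul 6 M v).

(* Xc i = ^{J_i}X_{i-1} (constant), XJ i q = ^{i}X_{J_i}(q), Phi i = Phi_i *)
Definition Xlink (XJc : nat -> mat) (XJ : nat -> R -> mat) (i : nat) (q : R) : mat :=
  mmul 6 (XJ i q) (XJc i).

Fixpoint vel (Phi : nat -> vec) (XJc : nat -> mat) (XJ : nat -> R -> mat)
    (v1 : vec) (q qd : nat -> R) (n : nat) : vec :=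
  match n with
  | O => v1
  | S n' =>
      match n' with
      | O => v1
      | S _ => fun k =>
          mvmul 6 (Xlink XJc XJ (S n') (q (S n'))) (vel Phi XJc XJ v1 q qd n') k
          + qd (S n') * Phi (S n') k
      end
  end.

(* A parameter vector of R^{10N}: dp j is the 10-vector of body j (1 <= j <= N);
   entries outside this range are required to be zero. *)
Definition param := nat -> vec.
Definition is_param (N : nat) (dp : param) : Prop :=
  forall j k, (j = 0 \/ N < j \/ 10 <= k)%nat -> dp j k = 0.

Definition nullspace (N : nat) (Phi : nat -> vec) (XJc : nat -> mat)
    (XJ : nat -> R -> mat) (dp : param) : Prop :=
  is_param N dp /\
  forall (v1 : vec) (q qd : nat -> R),
    sumR N (fun j => quad6 (vel Phi XJc XJ v1 q qd (S j)) (hat (dp (S j)))) = 0.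

Definition inertia_transfer (N : nat) (Phi : nat -> vec) (XJc : nat -> mat)
    (i : nat) (dp : param) : Prop :=
  is_param N dp /\
  meq 6 6 (hat (dp (i - 1)%nat))
          (mopp (mmul 6 (mmul 6 (mtr (XJc i)) (hat (dp i))) (XJc i))) /\
  (forall b, (b < 6)%nat -> sumR 6 (fun a => Phi i a * hat (dp i) a b) = 0) /\
  meq 6 6 (madd (mmul 6 (mtr (scross (Phi i))) (hat (dp i)))
                (mmul 6 (hat (dp i)) (scross (Phi i)))) mzero /\
  (forall j, j <> i -> j <> (i - 1)%nat -> meq 6 6 (hat (dp j)) mzero).

Definition is_direct_sum (N : nat) (Sp : param -> Prop) (T : nat -> param -> Prop) : Prop :=
  (forall dp, is_param N dp ->
     (Sp dp <->
      exists t : nat -> param,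
        (forall i, (2 <= i <= N)%nat -> T i (t i)) /\
        (forall j k, dp j k = sumR (N - 1) (fun m => t (m + 2)%nat j k)))) /\
  (forall t : nat -> param,
     (forall i, (2 <= i <= N)%nat -> T i (t i)) ->
     (forall j k, sumR (N - 1) (fun m => t (m + 2)%nat j k) = 0) ->
     forall i, (2 <= i <= N)%nat -> forall j k, t i j k = 0).

(* Main.v *)
Require Import Defs.
From Stdlib Require Import Reals Lra Lia FunctionalExtensionality.
Open Scope R_scope.

Lemma sumR_ext n f g : (forall k, (k < n)%nat -> f k = g k) -> sumR n f = sumR n g.
Proof. induction n; simpl; intros H; auto. rewrite IHn by (intros; apply H; lia). rewrite H by lia. ring. Qed.

Lemma sumR_plus n f g : sumR n (fun k => f k + g k) = sumR n f + sumR n g.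
Proof. induction n; simpl; [ring|]. rewrite IHn; ring. Qed.

Lemma sumR_scal n c f : sumR n (fun k => c * f k) = c * sumR n f.
Proof. induction n; simpl; [ring|]. rewrite IHn; ring. Qed.

Lemma sumR_minus n f g : sumR n (fun k => f k - g k) = sumR n f - sumR n g.
Proof. induction n; simpl; [ring|]. rewrite IHn; ring. Qed.

Lemma sumR_zero n f : (forall k, (k < n)%nat -> f k = 0) -> sumR n f = 0.
Proof. induction n; simpl; intros H; [ring|]. rewrite IHn by (intros; apply H; lia). rewrite H by lia. ring. Qed.

Lemma sumR_swap n m F : sumR n (fun i => sumR m (fun j => F i j)) = sumR m (fun j => sumR n (fun i => F i j)).
Proof.
  induction n; simpl.
  - symmetry; apply sumR_zero; auto.
  - rewrite IHn. rewrite <- sumR_plus. reflexivity.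
Qed.

Lemma sumR_ind n c x : (c < n)%nat -> sumR n (fun m => if Nat.eqb m c then x else 0) = x.
Proof.
  induction n; intros H; [lia|]. simpl.
  destruct (Nat.eq_dec c n).
  - subst. rewrite Nat.eqb_refl. rewrite sumR_zero; [ring|].
    intros k Hk. destruct (Nat.eqb_spec k n); [lia|auto].
  - rewrite IHn by lia. destruct (Nat.eqb_spec n c); [lia|ring].
Qed.

Definition e (i : nat) : vec := fun k => if Nat.eqb k i then 1 else 0.

Lemma sumR_unit n i f : (i < n)%nat -> sumR n (fun k => e i k * f k) = f i.
Proof.
  intros H. rewrite (sumR_ext n _ (fun k => if Nat.eqb k i then f i else 0)).
  - apply sumR_ind; auto.
  - intros k _. unfold e. destruct (Nat.eqb_spec k i); subst; ring.
Qed.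

Lemma sumR_unit' n i f : (i < n)%nat -> sumR n (fun k => f k * e i k) = f i.
Proof. intros H. rewrite <- (sumR_unit n i f H). apply sumR_ext; intros; ring. Qed.

Lemma mvmul_mmul n A B x i : mvmul n (mmul n A B) x i = mvmul n A (mvmul n B x) i.
Proof.
  unfold mvmul, mmul.
  rewrite (sumR_ext n (fun k => sumR n (fun k0 => A i k0 * B k0 k) * x k)
     (fun k => sumR n (fun k0 => A i k0 * B k0 k * x k))).
  2:{ intros. rewrite Rmult_comm, <- sumR_scal. apply sumR_ext; intros; ring. }
  rewrite sumR_swap. apply sumR_ext; intros. rewrite <- sumR_scal. apply sumR_ext; intros; ring.
Qed.

Lemma dot_mvmul_tr n x A y : dot n x (mvmul n (mtr A) y) = dot n (mvmul n A x) y.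
Proof.
  unfold dot, mvmul, mtr.
  rewrite (sumR_ext n (fun k => x k * sumR n (fun k0 => A k0 k * y k0))
     (fun k => sumR n (fun k0 => x k * A k0 k * y k0))).
  2:{ intros. rewrite <- sumR_scal. apply sumR_ext; intros; ring. }
  rewrite sumR_swap. apply sumR_ext; intros. rewrite Rmult_comm, <- sumR_scal. apply sumR_ext; intros; ring.
Qed.

Lemma mvmul_ext_v n A x y i : (forall k, (k < n)%nat -> x k = y k) -> mvmul n A x i = mvmul n A y i.
Proof. intros H; unfold mvmul; apply sumR_ext; intros; rewrite H; auto. Qed.

Lemma mvmul_ext_m n A B x i : (forall k, (k < n)%nat -> A i k = B i k) -> mvmul n A x i = mvmul n B x i.
Proof. intros H; unfold mvmul; apply sumR_ext; intros; rewrite H; auto. Qed.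

Lemma dot_ext n x x' y y' : (forall k, (k < n)%nat -> x k = x' k) -> (forall k, (k < n)%nat -> y k = y' k) ->
  dot n x y = dot n x' y'.
Proof. intros H1 H2; unfold dot; apply sumR_ext; intros; rewrite H1, H2; auto. Qed.

Lemma quad6_ext v v' M : (forall k, (k < 6)%nat -> v k = v' k) -> quad6 v M = quad6 v' M.
Proof. intros H. unfold quad6. apply dot_ext; auto. intros. apply mvmul_ext_v; auto. Qed.

Lemma quad6_extM v M M' : meq 6 6 M M' -> quad6 v M = quad6 v M'.
Proof. intros H. unfold quad6. apply dot_ext; auto. intros. apply mvmul_ext_m; auto. Qed.

Lemma mvmul_lin n A x y t i : mvmul n A (fun k => x k + t * y k) i = mvmul n A x i + t * mvmul n A y i.
Proof. unfold mvmul. rewrite <- sumR_scal, <- sumR_plus. apply sumR_ext; intros; ring. Qed.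

Lemma dot_lin_l n x y t z : dot n (fun k => x k + t * y k) z = dot n x z + t * dot n y z.
Proof. unfold dot. rewrite <- sumR_scal, <- sumR_plus. apply sumR_ext; intros; ring. Qed.

Lemma dot_lin_r n x y t z : dot n z (fun k => x k + t * y k) = dot n z x + t * dot n z y.
Proof. unfold dot. rewrite <- sumR_scal, <- sumR_plus. apply sumR_ext; intros; ring. Qed.

Lemma quad_expand v y t M : quad6 (fun k => v k + t * y k) M =
  quad6 v M + t * (dot 6 v (mvmul 6 M y) + dot 6 y (mvmul 6 M v)) + t * t * quad6 y M.
Proof.
  unfold quad6. rewrite dot_lin_l.
  rewrite (dot_ext 6 v v _ (fun k => mvmul 6 M v k + t * mvmul 6 M y k)); auto.
  2:{ intros; apply mvmul_lin. }
  rewrite (dot_ext 6 y y _ (fun k => mvmul 6 M v k + t * mvmul 6 M y k)); auto.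
  2:{ intros; apply mvmul_lin. }
  rewrite !dot_lin_r. ring.
Qed.

Lemma dot_e n M i j : (i < n)%nat -> (j < n)%nat -> dot n (e i) (mvmul n M (e j)) = M i j.
Proof.
  intros Hi Hj. unfold dot. rewrite sumR_unit by auto. unfold mvmul. rewrite sumR_unit' by auto. auto.
Qed.

Lemma dot_sym_M n x y M : (forall i j, (i < n)%nat -> (j < n)%nat -> M i j = M j i) ->
  dot n x (mvmul n M y) = dot n y (mvmul n M x).
Proof.
  intros HM. rewrite (dot_ext n y y (mvmul n M x) (mvmul n (mtr M) x)); auto.
  2:{ intros; apply mvmul_ext_m; intros; unfold mtr; apply HM; auto. }
  rewrite dot_mvmul_tr. unfold dot. apply sumR_ext; intros; ring.
Qed.

Lemma polar M : (forall i j, (i < 6)%nat -> (j < 6)%nat -> M i j = M j i) ->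
  (forall v, quad6 v M = 0) -> meq 6 6 M mzero.
Proof.
  intros HS HQ i j Hi Hj. unfold mzero.
  pose proof (HQ (e i)) as H1. pose proof (HQ (e j)) as H2.
  pose proof (HQ (fun k => e i k + 1 * e j k)) as H3.
  rewrite quad_expand in H3. unfold quad6 in H1, H2, H3.
  rewrite !dot_e in H1, H2, H3 by auto. rewrite (dot_e 6 M i j), (dot_e 6 M j i), (dot_e 6 M j j), (HS j i) in H3 by auto. lra.
Qed.

Ltac d6 i := destruct i as [|[|[|[|[|[|i]]]]]].
Ltac hs := unfold hat, block, Ibar, skew, hvec, mscal, ident, mtr, mzero, mopp, madd, scross, ang, lin in *; cbn in *.

Lemma hat_sym p i j : hat p i j = hat p j i.
Proof. d6 i; d6 j; hs; try ring. Qed.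

Lemma hat_lin a b x y i j : hat (fun k => a * x k + b * y k) i j = a * hat x i j + b * hat y i j.
Proof. d6 i; d6 j; hs; ring. Qed.

Lemma hat_zero p i j : (forall k, (k < 10)%nat -> p k = 0) -> hat p i j = 0.
Proof. intros H. d6 i; d6 j; hs; rewrite ?H by lia; ring. Qed.

Lemma hat_zero_inv p : meq 6 6 (hat p) mzero -> forall k, (k < 10)%nat -> p k = 0.
Proof.
  intros H k Hk. unfold meq, mzero in H.
  destruct k as [|[|[|[|[|[|[|[|[|[|k]]]]]]]]]]; try lia.
  - specialize (H 3%nat 3%nat ltac:(lia) ltac:(lia)); hs; lra.
  - specialize (H 1%nat 5%nat ltac:(lia) ltac:(lia)); hs; lra.
  - specialize (H 0%nat 5%nat ltac:(lia) ltac:(lia)); hs; lra.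
  - specialize (H 0%nat 4%nat ltac:(lia) ltac:(lia)); hs; lra.
  - specialize (H 0%nat 0%nat ltac:(lia) ltac:(lia)); hs; lra.
  - specialize (H 0%nat 1%nat ltac:(lia) ltac:(lia)); hs; lra.
  - specialize (H 0%nat 2%nat ltac:(lia) ltac:(lia)); hs; lra.
  - specialize (H 1%nat 1%nat ltac:(lia) ltac:(lia)); hs; lra.
  - specialize (H 1%nat 2%nat ltac:(lia) ltac:(lia)); hs; lra.
  - specialize (H 2%nat 2%nat ltac:(lia) ltac:(lia)); hs; lra.
Qed.

Definition vee (M : mat) : vec := fun k =>
  match k with
  | 0 => M 3%nat 3%nat | 1 => - M 1%nat 5%nat | 2 => M 0%nat 5%nat | 3 => - M 0%nat 4%nat
  | 4 => M 0%nat 0%nat | 5 => M 0%nat 1%nat | 6 => M 0%nat 2%nat | 7 => M 1%nat 1%nat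
  | 8 => M 1%nat 2%nat | 9 => M 2%nat 2%nat | _ => 0 end.

Lemma hat_vee M : (forall i j, (i < 6)%nat -> (j < 6)%nat -> M i j = M j i) ->
  M 4%nat 4%nat = M 3%nat 3%nat -> M 5%nat 5%nat = M 3%nat 3%nat ->
  M 3%nat 4%nat = 0 -> M 3%nat 5%nat = 0 -> M 4%nat 5%nat = 0 ->
  M 0%nat 3%nat = 0 -> M 1%nat 4%nat = 0 -> M 2%nat 5%nat = 0 ->
  M 1%nat 3%nat = - M 0%nat 4%nat -> M 2%nat 3%nat = - M 0%nat 5%nat -> M 2%nat 4%nat = - M 1%nat 5%nat ->
  meq 6 6 (hat (vee M)) M.
Proof.
  intros HS h1 h2 h3 h4 h5 h6 h7 h8 h9 h10 h11 i j Hi Hj.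
  d6 i; try lia; d6 j; try lia; hs; try lra.
  all: match goal with |- _ = ?F ?a ?b => rewrite (HS a b) by lia; lra end.
Qed.

Lemma mmul_meq n A A' B B' : meq n n A A' -> meq n n B B' -> meq n n (mmul n A B) (mmul n A' B').
Proof. intros H1 H2 i j Hi Hj. unfold mmul. apply sumR_ext; intros. rewrite H1, H2; auto. Qed.

Lemma mtr_meq n A A' : meq n n A A' -> meq n n (mtr A) (mtr A').
Proof. intros H i j Hi Hj. unfold mtr. apply H; auto. Qed.

Lemma congr_sym n X H : (forall i j, (i < n)%nat -> (j < n)%nat -> H i j = H j i) ->
  forall i j, mmul n (mmul n (mtr X) H) X i j = mmul n (mmul n (mtr X) H) X j i.
Proof.
  intros HS i j. unfold mmul, mtr.
  rewrite (sumR_ext n _ (fun k => sumR n (fun k0 => X k0 i * H k0 k * X k j))).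
  2:{ intros. rewrite Rmult_comm, <- sumR_scal. apply sumR_ext; intros; ring. }
  rewrite (sumR_ext n (fun k => sumR n (fun k0 => X k0 j * H k0 k) * X k i)
     (fun k => sumR n (fun k0 => X k0 j * H k0 k * X k i))).
  2:{ intros. rewrite Rmult_comm, <- sumR_scal. apply sumR_ext; intros; ring. }
  rewrite sumR_swap. apply sumR_ext; intros. apply sumR_ext; intros. rewrite HS by auto. ring.
Qed.

Definition Xb (Rm : mat) (p : vec) : mat := block Rm mzero (mopp (mmul 3 Rm (skew p))) Rm.
Definition Kp (Rm : mat) (p : vec) (pi : vec) : mat := mmul 6 (mmul 6 (mtr (Xb Rm p)) (hat pi)) (Xb Rm p).

Ltac hs2 := unfold Kp, Xb, mmul, hat, block, Ibar, skew, hvec, mscal, ident, mtr, mzero, mopp, madd, scross, ang, lin; cbn.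

Lemma K_br Rm p pi a b : (a < 3)%nat -> (b < 3)%nat ->
  Kp Rm p pi (3 + a)%nat (3 + b)%nat = pi 0%nat * mmul 3 (mtr Rm) Rm a b.
Proof. intros Ha Hb. destruct a as [|[|[|a]]]; try lia; destruct b as [|[|[|b]]]; try lia; hs2; ring. Qed.

Lemma K_tr Rm p pi a b : (a < 3)%nat -> (b < 3)%nat ->
  Kp Rm p pi a (3 + b)%nat = sumR 3 (fun c => sumR 3 (fun d => Rm c a * skew (hvec pi) c d * Rm d b))
     + pi 0%nat * sumR 3 (fun e => skew p a e * mmul 3 (mtr Rm) Rm e b).
Proof. intros Ha Hb. destruct a as [|[|[|a]]]; try lia; destruct b as [|[|[|b]]]; try lia; hs2; ring. Qed.

Lemma K_br' Rm p pi a b : meq 3 3 (mmul 3 (mtr Rm) Rm) ident -> (a < 3)%nat -> (b < 3)%nat ->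
  Kp Rm p pi (3 + a)%nat (3 + b)%nat = pi 0%nat * ident a b.
Proof. intros HG Ha Hb. rewrite K_br by auto. rewrite HG; auto. Qed.

Lemma K_tr' Rm p pi a b : meq 3 3 (mmul 3 (mtr Rm) Rm) ident -> (a < 3)%nat -> (b < 3)%nat ->
  Kp Rm p pi a (3 + b)%nat = sumR 3 (fun c => sumR 3 (fun d => Rm c a * skew (hvec pi) c d * Rm d b))
     + pi 0%nat * skew p a b.
Proof.
  intros HG Ha Hb. rewrite K_tr by auto. f_equal. f_equal.
  rewrite (sumR_ext 3 _ (fun e => skew p a e * ident e b)).
  2:{ intros. rewrite HG; auto. }
  destruct a as [|[|[|a]]]; try lia; destruct b as [|[|[|b]]]; try lia; unfold ident; cbn; ring.
Qed.

Lemma hat_transfer X pi : is_spatial_transform X ->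
  meq 6 6 (hat (vee (mopp (mmul 6 (mmul 6 (mtr X) (hat pi)) X))))
          (mopp (mmul 6 (mmul 6 (mtr X) (hat pi)) X)).
Proof.
  intros [Rm [p [[HG Hdet] HX]]].
  assert (HK : meq 6 6 (mmul 6 (mmul 6 (mtr X) (hat pi)) X) (Kp Rm p pi)).
  { unfold Kp. apply mmul_meq; [apply mmul_meq; [apply mtr_meq; exact HX| intros i j _ _; reflexivity] | exact HX]. }
  assert (Hbr : forall a b, (a < 3)%nat -> (b < 3)%nat ->
     mmul 6 (mmul 6 (mtr X) (hat pi)) X (3 + a)%nat (3 + b)%nat = pi 0%nat * ident a b).
  { intros. rewrite HK by lia. apply K_br'; auto. }
  assert (Htr : forall a b, (a < 3)%nat -> (b < 3)%nat ->
     mmul 6 (mmul 6 (mtr X) (hat pi)) X a (3 + b)%nat = sumR 3 (fun c => sumR 3 (fun d => Rm c a * skew (hvec pi) c d * Rm d b))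
     + pi 0%nat * skew p a b).
  { intros. rewrite HK by lia. apply K_tr'; auto. }
  apply hat_vee; unfold mopp.
  - intros. rewrite congr_sym; auto. intros; apply hat_sym.
  - pose proof (Hbr 1%nat 1%nat) as E1; pose proof (Hbr 0%nat 0%nat) as E0. cbn [Nat.add] in E1, E0.
    rewrite E1, E0 by lia. unfold ident; cbn; ring.
  - pose proof (Hbr 2%nat 2%nat) as E1; pose proof (Hbr 0%nat 0%nat) as E0. cbn [Nat.add] in E1, E0.
    rewrite E1, E0 by lia. unfold ident; cbn; ring.
  - pose proof (Hbr 0%nat 1%nat) as E1. cbn [Nat.add] in E1. rewrite E1 by lia. unfold ident; cbn; ring.
  - pose proof (Hbr 0%nat 2%nat) as E1. cbn [Nat.add] in E1. rewrite E1 by lia. unfold ident; cbn; ring.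
  - pose proof (Hbr 1%nat 2%nat) as E1. cbn [Nat.add] in E1. rewrite E1 by lia. unfold ident; cbn; ring.
  - pose proof (Htr 0%nat 0%nat) as E1. cbn [Nat.add] in E1. rewrite E1 by lia. unfold skew, hvec; cbn; ring.
  - pose proof (Htr 1%nat 1%nat) as E1. cbn [Nat.add] in E1. rewrite E1 by lia. unfold skew, hvec; cbn; ring.
  - pose proof (Htr 2%nat 2%nat) as E1. cbn [Nat.add] in E1. rewrite E1 by lia. unfold skew, hvec; cbn; ring.
  - pose proof (Htr 1%nat 0%nat) as E1. pose proof (Htr 0%nat 1%nat) as E2. cbn [Nat.add] in E1, E2.
    rewrite E1, E2 by lia. unfold skew, hvec; cbn; ring.
  - pose proof (Htr 2%nat 0%nat) as E1. pose proof (Htr 0%nat 2%nat) as E2. cbn [Nat.add] in E1, E2.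
    rewrite E1, E2 by lia. unfold skew, hvec; cbn; ring.
  - pose proof (Htr 2%nat 1%nat) as E1. pose proof (Htr 1%nat 2%nat) as E2. cbn [Nat.add] in E1, E2.
    rewrite E1, E2 by lia. unfold skew, hvec; cbn; ring.
Qed.

Lemma dl_ext f x l l' : l = l' -> derivable_pt_lim f x l -> derivable_pt_lim f x l'.
Proof. intros ->; auto. Qed.

Lemma sum_deriv n (F : nat -> R -> R) dF x : (forall c, (c < n)%nat -> derivable_pt_lim (F c) x (dF c)) ->
  derivable_pt_lim (fun s => sumR n (fun c => F c s)) x (sumR n dF).
Proof.
  induction n; intros H; simpl.
  - apply derivable_pt_lim_const.
  - apply (derivable_pt_lim_plus (fun s => sumR n (fun c => F c s)) (F n)); auto.
Qed.

Lemma d_mult_c (f : R -> R) c x l : derivable_pt_lim f x l -> derivable_pt_lim (fun s => f s * c) x (l * c).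
Proof.
  intros H. eapply dl_ext; [|apply (derivable_pt_lim_mult f (fct_cte c)); [exact H| apply derivable_pt_lim_const]].
  unfold fct_cte; ring.
Qed.

Lemma d_c_mult (f : R -> R) c x l : derivable_pt_lim f x l -> derivable_pt_lim (fun s => c * f s) x (c * l).
Proof.
  intros H. eapply dl_ext; [|apply (derivable_pt_lim_mult (fct_cte c) f); [apply derivable_pt_lim_const|exact H]].
  unfold fct_cte; ring.
Qed.

Lemma deriv_quad (X : R -> mat) (D : mat) w H s0 :
  (forall a b, (a < 6)%nat -> (b < 6)%nat -> derivable_pt_lim (fun s => X s a b) s0 (D a b)) ->
  derivable_pt_lim (fun s => quad6 (mvmul 6 (X s) w) H) s0
   (dot 6 (mvmul 6 D w) (mvmul 6 H (mvmul 6 (X s0) w)) + dot 6 (mvmul 6 (X s0) w) (mvmul 6 H (mvmul 6 D w))).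
Proof.
  intros HD.
  assert (Hg : forall a, (a < 6)%nat -> derivable_pt_lim (fun s => mvmul 6 (X s) w a) s0 (mvmul 6 D w a)).
  { intros a Ha. unfold mvmul. apply (sum_deriv 6 (fun c s => X s a c * w c)). intros c Hc.
    apply d_mult_c; auto. }
  assert (Hh : forall a, (a < 6)%nat -> derivable_pt_lim (fun s => mvmul 6 H (mvmul 6 (X s) w) a) s0
     (mvmul 6 H (mvmul 6 D w) a)).
  { intros a Ha. unfold mvmul at 1 3. apply (sum_deriv 6 (fun c s => H a c * mvmul 6 (X s) w c)). intros c Hc.
    apply d_c_mult; auto. }
  unfold quad6 at 1. unfold dot at 1.
  eapply dl_ext; [| apply (sum_deriv 6 (fun a s => mvmul 6 (X s) w a * mvmul 6 H (mvmul 6 (X s) w) a)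
       (fun a => mvmul 6 D w a * mvmul 6 H (mvmul 6 (X s0) w) a + mvmul 6 (X s0) w a * mvmul 6 H (mvmul 6 D w) a))].
  - rewrite sumR_plus. reflexivity.
  - intros c Hc. apply (derivable_pt_lim_mult (fun s => mvmul 6 (X s) w c) (fun s => mvmul 6 H (mvmul 6 (X s) w) c)); auto.
Qed.

Lemma sumR_opp n f : sumR n (fun k => - f k) = - sumR n f.
Proof. induction n; simpl; [ring|]. rewrite IHn; ring. Qed.

Lemma mvmul_opp n A x i : mvmul n (mopp A) x i = - mvmul n A x i.
Proof. unfold mvmul, mopp. rewrite <- sumR_opp. apply sumR_ext; intros; ring. Qed.

Lemma mvmul_negv n A x i : mvmul n A (fun k => - x k) i = - mvmul n A x i.
Proof. unfold mvmul. rewrite <- sumR_opp. apply sumR_ext; intros; ring. Qed.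

Lemma dot_negl n x y : dot n (fun k => - x k) y = - dot n x y.
Proof. unfold dot. rewrite <- sumR_opp. apply sumR_ext; intros; ring. Qed.

Lemma dot_negr n x y : dot n x (fun k => - y k) = - dot n x y.
Proof. unfold dot. rewrite <- sumR_opp. apply sumR_ext; intros; ring. Qed.

Lemma mvmul_madd n A B x i : mvmul n (madd A B) x i = mvmul n A x i + mvmul n B x i.
Proof. unfold mvmul, madd. rewrite <- sumR_plus. apply sumR_ext; intros; ring. Qed.

Lemma dot_plus_r n z x y : dot n z (fun k => x k + y k) = dot n z x + dot n z y.
Proof. unfold dot. rewrite <- sumR_plus. apply sumR_ext; intros; ring. Qed.

Definition Mcond (P H : mat) : mat := madd (mmul 6 (mtr P) H) (mmul 6 H P).

Lemma deriv_quad2 (X : R -> mat) P w H s0 :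
  (forall a b, (a < 6)%nat -> (b < 6)%nat ->
     derivable_pt_lim (fun s => X s a b) s0 (mopp (mmul 6 P (X s0)) a b)) ->
  derivable_pt_lim (fun s => quad6 (mvmul 6 (X s) w) H) s0
   (- quad6 (mvmul 6 (X s0) w) (Mcond P H)).
Proof.
  intros HD. eapply dl_ext; [|apply deriv_quad; exact HD].
  set (g := mvmul 6 (X s0) w).
  assert (E : forall i, mvmul 6 (mopp (mmul 6 P (X s0))) w i = - mvmul 6 P g i).
  { intros i. rewrite mvmul_opp, mvmul_mmul. reflexivity. }
  rewrite (dot_ext 6 _ (fun k => - mvmul 6 P g k) (mvmul 6 H g) (mvmul 6 H g)); auto.
  rewrite (dot_ext 6 g g _ (fun k => - mvmul 6 H (mvmul 6 P g) k)); auto.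
  2:{ intros k _. rewrite <- mvmul_negv. apply mvmul_ext_v. intros; apply E. }
  rewrite dot_negl, dot_negr. unfold quad6.
  rewrite (dot_ext 6 g g (mvmul 6 (Mcond P H) g) (fun k => mvmul 6 (mtr P) (mvmul 6 H g) k + mvmul 6 H (mvmul 6 P g) k)); auto.
  2:{ intros k _. unfold Mcond. rewrite mvmul_madd, !mvmul_mmul. reflexivity. }
  rewrite dot_plus_r, dot_mvmul_tr. ring.
Qed.

Lemma mvmul_ident A x k : meq 6 6 A ident -> (k < 6)%nat -> mvmul 6 A x k = x k.
Proof.
  intros HA Hk. rewrite (mvmul_ext_m 6 A ident) by (intros; apply HA; auto).
  unfold mvmul. rewrite (sumR_ext 6 _ (fun j => e k j * x j)); [apply sumR_unit; auto|].
  intros j _. unfold ident, e. rewrite Nat.eqb_sym. reflexivity.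
Qed.

Lemma quad_zero v M : meq 6 6 M mzero -> quad6 v M = 0.
Proof.
  intros H. rewrite (quad6_extM v M mzero H). unfold quad6, dot, mvmul, mzero.
  apply sumR_zero; intros. rewrite sumR_zero; [ring|]. intros; ring.
Qed.

Lemma const_of_deriv f : (forall x, derivable_pt_lim f x 0) -> forall x y, f x = f y.
Proof.
  intros H. pose (pr := fun x => exist (fun l => derivable_pt_abs f x l) 0 (H x) : derivable_pt f x).
  apply (null_derivative_1 f pr). intros x. reflexivity.
Qed.

Definition adjv (Rm : mat) (a : vec) : vec := fun k =>
  match k with
  | 0 => (Rm 1%nat 1%nat * Rm 2%nat 2%nat - Rm 1%nat 2%nat * Rm 2%nat 1%nat) * a 0%nat
       + (Rm 0%nat 2%nat * Rm 2%nat 1%nat - Rm 0%nat 1%nat * Rm 2%nat 2%nat) * a 1%nat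
       + (Rm 0%nat 1%nat * Rm 1%nat 2%nat - Rm 0%nat 2%nat * Rm 1%nat 1%nat) * a 2%nat
  | 1 => (Rm 1%nat 2%nat * Rm 2%nat 0%nat - Rm 1%nat 0%nat * Rm 2%nat 2%nat) * a 0%nat
       + (Rm 0%nat 0%nat * Rm 2%nat 2%nat - Rm 0%nat 2%nat * Rm 2%nat 0%nat) * a 1%nat
       + (Rm 0%nat 2%nat * Rm 1%nat 0%nat - Rm 0%nat 0%nat * Rm 1%nat 2%nat) * a 2%nat
  | 2 => (Rm 1%nat 0%nat * Rm 2%nat 1%nat - Rm 1%nat 1%nat * Rm 2%nat 0%nat) * a 0%nat
       + (Rm 0%nat 1%nat * Rm 2%nat 0%nat - Rm 0%nat 0%nat * Rm 2%nat 1%nat) * a 1%nat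
       + (Rm 0%nat 0%nat * Rm 1%nat 1%nat - Rm 0%nat 1%nat * Rm 1%nat 0%nat) * a 2%nat
  | _ => 0 end.

Lemma surj X : is_spatial_transform X -> forall w, exists x, forall i, (i < 6)%nat -> mvmul 6 X x i = w i.
Proof.
  intros [Rm [p [[HG Hdet] HX]]] w.
  set (x1 := adjv Rm w).
  set (x2 := fun k => adjv Rm (fun j => w (j + 3)%nat) k + mvmul 3 (skew p) x1 k).
  exists (fun k => if Nat.ltb k 3 then x1 k else x2 (k - 3)%nat).
  intros i Hi. rewrite (mvmul_ext_m 6 X (Xb Rm p)) by (intros; apply HX; auto).
  transitivity (det3 Rm * w i); [|rewrite Hdet; ring].
  unfold x2, x1. d6 i; try lia; hs2; unfold det3; ring.
Qed.

Lemma vel_SS_eq Phi XJc XJ v1 q qd m :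
  vel Phi XJc XJ v1 q qd (S (S m)) = fun k =>
   mvmul 6 (Xlink XJc XJ (S (S m)) (q (S (S m)))) (vel Phi XJc XJ v1 q qd (S m)) k
   + qd (S (S m)) * Phi (S (S m)) k.
Proof. reflexivity. Qed.

Lemma vel_dep Phi XJc XJ v1 q qd q' qd' n :
  (forall j, (j <= n)%nat -> q j = q' j /\ qd j = qd' j) ->
  vel Phi XJc XJ v1 q qd n = vel Phi XJc XJ v1 q' qd' n.
Proof.
  induction n; intros H; [reflexivity|].
  destruct n; [reflexivity|].
  rewrite !vel_SS_eq. rewrite IHn by (intros; apply H; lia).
  destruct (H (S (S n))) as [E1 E2]; [lia|]. rewrite E1, E2. reflexivity.
Qed.

Lemma vel_SS Phi XJc XJ v1 q qd m k :
  vel Phi XJc XJ v1 q qd (S (S m)) k =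
  mvmul 6 (XJ (S (S m)) (q (S (S m)))) (mvmul 6 (XJc (S (S m))) (vel Phi XJc XJ v1 q qd (S m))) k
  + qd (S (S m)) * Phi (S (S m)) k.
Proof. rewrite vel_SS_eq. unfold Xlink. rewrite mvmul_mmul. reflexivity. Qed.

Lemma preimage N Phi XJc XJ
  (HXc : forall i, (2 <= i <= N)%nat -> is_spatial_transform (XJc i))
  (HXJ0 : forall i, (2 <= i <= N)%nat -> meq 6 6 (XJ i 0) ident) :
  forall n, (1 <= n <= N)%nat -> forall w, exists v1, forall k, (k < 6)%nat ->
    vel Phi XJc XJ v1 (fun _ => 0) (fun _ => 0) n k = w k.
Proof.
  induction n; intros Hn w; [lia|].
  destruct n.
  - exists w. intros; reflexivity.
  - destruct (surj (XJc (S (S n))) (HXc (S (S n)) ltac:(lia)) w) as [x Hx].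
    destruct (IHn ltac:(lia) x) as [v1 Hv].
    exists v1. intros k Hk. rewrite vel_SS. rewrite mvmul_ident by (auto; apply HXJ0; lia).
    rewrite (mvmul_ext_v 6 _ _ x) by auto. rewrite Hx by auto. ring.
Qed.

Lemma invariance N Phi XJ
  (HXJ0 : forall i, (2 <= i <= N)%nat -> meq 6 6 (XJ i 0) ident)
  (HdXJ : forall i q a b, (2 <= i <= N)%nat -> (a < 6)%nat -> (b < 6)%nat ->
     derivable_pt_lim (fun s => XJ i s a b) q
       (mopp (mmul 6 (scross (Phi i)) (XJ i q)) a b))
  i H : (2 <= i <= N)%nat -> meq 6 6 (Mcond (scross (Phi i)) H) mzero ->
  forall w q, quad6 (mvmul 6 (XJ i q) w) H = quad6 w H.
Proof.
  intros Hi HM w q.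
  assert (Hc : forall x y, (fun s => quad6 (mvmul 6 (XJ i s) w) H) x = (fun s => quad6 (mvmul 6 (XJ i s) w) H) y).
  { apply const_of_deriv. intros x. eapply dl_ext; [|apply deriv_quad2; intros; apply HdXJ; auto].
    rewrite quad_zero; auto. ring. }
  rewrite (Hc q 0). cbn beta. apply quad6_ext. intros. apply mvmul_ident; auto.
Qed.

Lemma sumR_two n f c1 c2 : (c1 < n)%nat -> (c2 < n)%nat -> c1 <> c2 ->
  (forall j, (j < n)%nat -> j <> c1 -> j <> c2 -> f j = 0) -> sumR n f = f c1 + f c2.
Proof.
  intros H1 H2 H12 H. rewrite (sumR_ext n f (fun j => (if Nat.eqb j c1 then f c1 else 0) + (if Nat.eqb j c2 then f c2 else 0))).
  - rewrite sumR_plus, !sumR_ind; auto.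
  - intros j Hj. destruct (Nat.eqb_spec j c1); destruct (Nat.eqb_spec j c2); subst; try lia; try ring.
    rewrite H; auto; ring.
Qed.

Lemma hat_meq_zero_of p : (forall k, p k = 0) -> meq 6 6 (hat p) mzero.
Proof. intros H i j _ _. unfold mzero. apply hat_zero. auto. Qed.

Lemma phi_dot_zero Phi H : (forall b, (b < 6)%nat -> sumR 6 (fun a => Phi a * H a b) = 0) ->
  forall y, dot 6 Phi (mvmul 6 H y) = 0.
Proof.
  intros HP y. change (dot 6 Phi (mvmul 6 (mtr (mtr H)) y) = 0). rewrite dot_mvmul_tr.
  unfold dot. apply sumR_zero. intros b Hb. unfold mvmul, mtr.
  rewrite (sumR_ext 6 _ (fun a => Phi a * H a b)) by (intros; ring). rewrite HP; auto; ring.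
Qed.

Lemma T_in_N N Phi XJc XJ
  (HXJ0 : forall i, (2 <= i <= N)%nat -> meq 6 6 (XJ i 0) ident)
  (HdXJ : forall i q a b, (2 <= i <= N)%nat -> (a < 6)%nat -> (b < 6)%nat ->
     derivable_pt_lim (fun s => XJ i s a b) q
       (mopp (mmul 6 (scross (Phi i)) (XJ i q)) a b))
  i dp : (2 <= i <= N)%nat -> inertia_transfer N Phi XJc i dp -> nullspace N Phi XJc XJ dp.
Proof.
  intros Hi [Hp [Htr [HPhi [HM Hz]]]]. split; auto. intros v1 q qd.
  destruct i as [|[|m]]; try lia.
  rewrite (sumR_two N _ (S m) m) by (try lia; intros j Hj H1 H2; apply quad_zero; apply Hz; lia).
  cbn [Nat.sub] in Htr.
  set (H := hat (dp (S (S m)))). set (u := vel Phi XJc XJ v1 q qd (S m)).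
  rewrite (quad6_ext _ (fun k => mvmul 6 (XJ (S (S m)) (q (S (S m)))) (mvmul 6 (XJc (S (S m))) u) k
       + qd (S (S m)) * Phi (S (S m)) k)) by (intros; apply vel_SS).
  rewrite quad_expand.
  rewrite (dot_sym_M 6 _ (Phi (S (S m))) H) by (intros; apply hat_sym).
  rewrite phi_dot_zero by auto. unfold quad6 at 2. rewrite phi_dot_zero by auto.
  rewrite (invariance N Phi XJ HXJ0 HdXJ (S (S m)) H) by auto.
  rewrite (quad6_extM u _ _ Htr). unfold quad6.
  rewrite (dot_ext 6 u u _ (fun k => - mvmul 6 (mtr (XJc (S (S m)))) (mvmul 6 H (mvmul 6 (XJc (S (S m))) u)) k)); auto.
  2:{ intros. rewrite mvmul_opp, !mvmul_mmul. reflexivity. }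
  rewrite dot_negr, dot_mvmul_tr. ring.
Qed.

Lemma Mcond_sym P H : (forall i j, H i j = H j i) -> forall i j, Mcond P H i j = Mcond P H j i.
Proof.
  intros HS i j. unfold Mcond, madd, mmul, mtr. rewrite Rplus_comm. f_equal; apply sumR_ext; intros; rewrite HS; ring.
Qed.

Lemma body1 N Phi XJc XJ dp : (1 <= N)%nat -> nullspace N Phi XJc XJ dp ->
  (forall j, (1 < j)%nat -> forall kk, dp j kk = 0) -> forall kk, dp 1%nat kk = 0.
Proof.
  intros HN [Hp Hn] Hz kk.
  destruct (Nat.lt_ge_cases kk 10) as [Hk|Hk]; [|apply Hp; lia].
  apply hat_zero_inv; auto. apply polar; [intros; apply hat_sym|]. intros v.
  specialize (Hn v (fun _ => 0) (fun _ => 0)).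
  rewrite (sumR_ext N _ (fun j => if Nat.eqb j 0 then quad6 v (hat (dp 1%nat)) else 0)) in Hn.
  - rewrite sumR_ind in Hn by lia. auto.
  - intros j Hj. destruct (Nat.eqb_spec j 0); subst; [reflexivity|].
    apply quad_zero. apply hat_meq_zero_of. intros; apply Hz; lia.
Qed.

Lemma step_cond N Phi XJc XJ
  (HXc : forall i, (2 <= i <= N)%nat -> is_spatial_transform (XJc i))
  (HXJ0 : forall i, (2 <= i <= N)%nat -> meq 6 6 (XJ i 0) ident)
  (HdXJ : forall i q a b, (2 <= i <= N)%nat -> (a < 6)%nat -> (b < 6)%nat ->
     derivable_pt_lim (fun s => XJ i s a b) q
       (mopp (mmul 6 (scross (Phi i)) (XJ i q)) a b))
  k dp : (2 <= k <= N)%nat -> nullspace N Phi XJc XJ dp ->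
  (forall j, (k < j)%nat -> forall kk, dp j kk = 0) ->
  (forall b, (b < 6)%nat -> sumR 6 (fun a => Phi k a * hat (dp k) a b) = 0) /\
  meq 6 6 (Mcond (scross (Phi k)) (hat (dp k))) mzero.
Proof.
  intros Hk Hn Hz.
  destruct k as [|[|m]]; try lia.
  set (H := hat (dp (S (S m)))).
  assert (Q : forall w s t, quad6 (fun kk => mvmul 6 (XJ (S (S m)) s) w kk + t * Phi (S (S m)) kk) H = quad6 w H).
  { intros w s t.
    destruct (surj (XJc (S (S m))) (HXc (S (S m)) Hk) w) as [u0 Hu0].
    destruct (preimage N Phi XJc XJ HXc HXJ0 (S m) ltac:(lia) u0) as [v1 Hv1].
    set (qa := fun (a : R) (j : nat) => if Nat.eqb j (S (S m)) then a else 0).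
    assert (Hq : forall a b j, (j <= S m)%nat -> qa a j = 0 /\ qa b j = 0).
    { intros a b j Hj. unfold qa. destruct (Nat.eqb_spec j (S (S m))); [lia|auto]. }
    assert (Hvk : forall a b, quad6 (vel Phi XJc XJ v1 (qa a) (qa b) (S (S m))) H =
       quad6 (fun kk => mvmul 6 (XJ (S (S m)) a) w kk + b * Phi (S (S m)) kk) H).
    { intros a b. apply quad6_ext. intros kk Hkk. rewrite vel_SS.
      replace (qa a (S (S m))) with a by (unfold qa; rewrite Nat.eqb_refl; auto).
      replace (qa b (S (S m))) with b by (unfold qa; rewrite Nat.eqb_refl; auto).
      f_equal. apply mvmul_ext_v. intros j Hj.
      rewrite (vel_dep Phi XJc XJ v1 (qa a) (qa b) (fun _ => 0) (fun _ => 0)) by (intros; apply Hq; auto).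
      rewrite (mvmul_ext_v 6 _ _ u0) by auto. apply Hu0; auto. }
    assert (Hdiff : forall a b, quad6 (vel Phi XJc XJ v1 (qa a) (qa b) (S (S m))) H =
        quad6 (vel Phi XJc XJ v1 (qa 0) (qa 0) (S (S m))) H).
    { intros a b. pose proof (proj2 Hn v1 (qa a) (qa b)) as E1. pose proof (proj2 Hn v1 (qa 0) (qa 0)) as E2.
      assert (E : sumR N (fun j => quad6 (vel Phi XJc XJ v1 (qa a) (qa b) (S j)) (hat (dp (S j))))
                - sumR N (fun j => quad6 (vel Phi XJc XJ v1 (qa 0) (qa 0) (S j)) (hat (dp (S j))))
                = quad6 (vel Phi XJc XJ v1 (qa a) (qa b) (S (S m))) H -
                  quad6 (vel Phi XJc XJ v1 (qa 0) (qa 0) (S (S m))) H).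
      { rewrite <- sumR_minus.
        rewrite (sumR_ext N _ (fun j => if Nat.eqb j (S m) then
            (quad6 (vel Phi XJc XJ v1 (qa a) (qa b) (S (S m))) H -
             quad6 (vel Phi XJc XJ v1 (qa 0) (qa 0) (S (S m))) H) else 0)).
        - apply sumR_ind; lia.
        - intros j Hj. destruct (Nat.eqb_spec j (S m)); [subst; reflexivity|].
          destruct (Nat.lt_ge_cases j (S m)).
          + rewrite (vel_dep Phi XJc XJ v1 (qa a) (qa b) (qa 0) (qa 0) (S j)); [ring|].
            intros j' Hj'. destruct (Hq a b j' ltac:(lia)) as [E3 E4]; destruct (Hq 0 0 j' ltac:(lia)) as [E5 E6].
            split; congruence.
          + rewrite !quad_zero; [ring| |]; apply hat_meq_zero_of; intros; apply Hz; lia. }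
      lra. }
    rewrite <- Hvk, Hdiff, Hvk. apply quad6_ext. intros. rewrite mvmul_ident; [ring| apply HXJ0; lia | auto]. }
  split.
  - assert (HD : forall w, dot 6 (Phi (S (S m))) (mvmul 6 H w) = 0).
    { intros w. pose proof (Q w 0 1) as Q1. pose proof (Q w 0 (-1)) as Q2.
      rewrite (quad6_ext _ (fun kk => w kk + 1 * Phi (S (S m)) kk)) in Q1
        by (intros; rewrite mvmul_ident; [ring| apply HXJ0; lia | auto]).
      rewrite (quad6_ext _ (fun kk => w kk + (-1) * Phi (S (S m)) kk)) in Q2
        by (intros; rewrite mvmul_ident; [ring| apply HXJ0; lia | auto]).
      rewrite quad_expand in Q1, Q2.
      rewrite (dot_sym_M 6 w (Phi (S (S m))) H) in Q1, Q2 by (intros; apply hat_sym). lra. }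
    intros b Hb. specialize (HD (e b)). unfold dot, mvmul in HD. rewrite <- HD. apply sumR_ext; intros.
    rewrite sumR_unit'; auto.
  - apply polar; [intros; apply Mcond_sym; intros; apply hat_sym|]. intros w.
    assert (Hf : (fun s => quad6 (mvmul 6 (XJ (S (S m)) s) w) H) = fun _ => quad6 w H).
    { extensionality s. rewrite <- (Q w s 0). apply quad6_ext; intros; ring. }
    pose proof (deriv_quad2 (XJ (S (S m))) (scross (Phi (S (S m)))) w H 0
       (fun a b Ha Hb => HdXJ (S (S m)) 0 a b Hk Ha Hb)) as D1.
    rewrite Hf in D1. pose proof (derivable_pt_lim_const (quad6 w H) 0) as D2.
    pose proof (uniqueness_limite (fun _ => quad6 w H) 0 _ _ D1 D2) as U.
    rewrite (quad6_ext _ w) in U by (intros; apply mvmul_ident; [apply HXJ0; lia| auto]). lra.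
Qed.

Lemma mmul_zero_r n A H i j : (forall a b, H a b = 0) -> mmul n A H i j = 0.
Proof. intros Hz. unfold mmul. apply sumR_zero. intros. rewrite Hz; ring. Qed.

Lemma mmul_zero_l n A H i j : (forall a b, H a b = 0) -> mmul n H A i j = 0.
Proof. intros Hz. unfold mmul. apply sumR_zero. intros. rewrite Hz; ring. Qed.

Lemma mmul_zero_mid n A H B i j : (forall a b, H a b = 0) -> mmul n (mmul n A H) B i j = 0.
Proof. intros Hz. apply mmul_zero_l. intros; apply mmul_zero_r; auto. Qed.

Lemma T_zero N Phi XJc i : inertia_transfer N Phi XJc i (fun _ _ => 0).
Proof.
  assert (Hh : forall a b, hat (fun _ => 0) a b = 0) by (intros; apply hat_zero; auto).
  split; [intros j k _; reflexivity|]. split; [|split; [|split]].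
  - intros a b _ _. rewrite Hh. unfold mopp. rewrite mmul_zero_mid; auto; ring.
  - intros b _. apply sumR_zero; intros. rewrite Hh; ring.
  - intros a b _ _. unfold madd, mzero. rewrite mmul_zero_r, mmul_zero_l; auto; ring.
  - intros j _ _ a b _ _. apply Hh.
Qed.

Lemma vee_high M kk : (10 <= kk)%nat -> vee M kk = 0.
Proof. intros H. destruct kk as [|[|[|[|[|[|[|[|[|[|kk]]]]]]]]]]; try lia; reflexivity. Qed.

Lemma hat_ext p p' : (forall k, p k = p' k) -> hat p = hat p'.
Proof. intros H. f_equal. extensionality k. auto. Qed.

Lemma quad_lin v A B c : quad6 v (fun a b => A a b + c * B a b) = quad6 v A + c * quad6 v B.
Proof.
  unfold quad6. rewrite (dot_ext 6 v v _ (fun k => mvmul 6 A v k + c * mvmul 6 B v k)); auto.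
  - apply dot_lin_r.
  - intros. unfold mvmul. rewrite <- sumR_scal, <- sumR_plus. apply sumR_ext; intros; ring.
Qed.

Lemma quad_sum v n (M : nat -> mat) : quad6 v (fun a b => sumR n (fun l => M l a b)) = sumR n (fun l => quad6 v (M l)).
Proof.
  induction n; simpl.
  - unfold quad6, dot, mvmul. apply sumR_zero; intros. rewrite sumR_zero; [ring|]. intros; ring.
  - rewrite <- IHn. rewrite <- (Rmult_1_l (quad6 v (M n))). rewrite <- quad_lin. apply quad6_extM.
    intros a b _ _. ring.
Qed.

Lemma hat_sum n (P : nat -> vec) p : (forall k, p k = sumR n (fun m => P m k)) ->
  forall a b, hat p a b = sumR n (fun m => hat (P m) a b).
Proof.
  revert p; induction n; intros p Hp a b; simpl.
  - apply hat_zero. intros; rewrite Hp; reflexivity.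
  - rewrite (hat_ext p (fun k => 1 * sumR n (fun m => P m k) + 1 * P n k)) by (intros; rewrite Hp; simpl; ring).
    rewrite hat_lin. rewrite (IHn (fun k => sumR n (fun m => P m k))) by auto. ring.
Qed.

Lemma param_zero_of_hat (p : param) j : (forall j k, (10 <= k)%nat -> p j k = 0) ->
  meq 6 6 (hat (p j)) mzero -> forall k, p j k = 0.
Proof.
  intros Hp Hm k. destruct (Nat.lt_ge_cases k 10); [apply hat_zero_inv; auto| apply Hp; auto].
Qed.

Lemma decomp N Phi XJc XJ
  (HXc : forall i, (2 <= i <= N)%nat -> is_spatial_transform (XJc i))
  (HXJ0 : forall i, (2 <= i <= N)%nat -> meq 6 6 (XJ i 0) ident)
  (HdXJ : forall i q a b, (2 <= i <= N)%nat -> (a < 6)%nat -> (b < 6)%nat ->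
     derivable_pt_lim (fun s => XJ i s a b) q
       (mopp (mmul 6 (scross (Phi i)) (XJ i q)) a b)) :
  forall n, (S n <= N)%nat -> forall dp, nullspace N Phi XJc XJ dp ->
  (forall j, (S n < j)%nat -> forall kk, dp j kk = 0) ->
  exists t : nat -> param, (forall i, (2 <= i <= N)%nat -> inertia_transfer N Phi XJc i (t i)) /\
    (forall i, (S n < i)%nat -> forall j kk, t i j kk = 0) /\
    (forall j kk, dp j kk = sumR (N - 1) (fun m => t (m + 2)%nat j kk)).
Proof.
  induction n; intros Hn dp Hdp Hz.
  - exists (fun _ _ _ => 0). split; [intros; apply T_zero|]. split; [auto|].
    intros j kk. rewrite sumR_zero by auto.
    destruct j as [|[|j]].
    + apply (proj1 Hdp); lia.
    + apply (body1 N Phi XJc XJ); auto.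
    + apply Hz; lia.
  - set (i := S (S n)).
    destruct (step_cond N Phi XJc XJ HXc HXJ0 HdXJ i dp ltac:(unfold i; lia) Hdp Hz) as [HP HM].
    set (X := XJc i). set (Mt := mopp (mmul 6 (mmul 6 (mtr X) (hat (dp i))) X)).
    set (s := fun j : nat => if Nat.eqb j i then dp i else if Nat.eqb j (S n) then vee Mt else fun _ : nat => 0).
    assert (Hs_i : s i = dp i) by (unfold s; rewrite Nat.eqb_refl; auto).
    assert (Hs_n : s (S n) = vee Mt).
    { unfold s. destruct (Nat.eqb_spec (S n) i); [unfold i in *; lia|]. rewrite Nat.eqb_refl; auto. }
    assert (Hs_o : forall j, j <> i -> j <> S n -> s j = fun _ => 0).
    { intros j H1 H2. unfold s. destruct (Nat.eqb_spec j i); [lia|]. destruct (Nat.eqb_spec j (S n)); [lia|auto]. }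
    assert (HT : inertia_transfer N Phi XJc i s).
    { split; [|split; [|split; [|split]]].
      - intros j kk Hj. destruct (Nat.eq_dec j i) as [E|E].
        + rewrite E, Hs_i. apply (proj1 Hdp). rewrite <- E; auto.
        + destruct (Nat.eq_dec j (S n)) as [E'|E'].
          * rewrite E', Hs_n. apply vee_high. unfold i in *; lia.
          * rewrite Hs_o; auto.
      - replace (i - 1)%nat with (S n) by (unfold i; lia). rewrite Hs_n, Hs_i. apply hat_transfer. apply HXc. unfold i; lia.
      - rewrite Hs_i; auto.
      - rewrite Hs_i; exact HM.
      - intros j H1 H2. rewrite Hs_o. apply hat_meq_zero_of; auto. auto. unfold i in *; lia. }
    assert (Hsn : nullspace N Phi XJc XJ s) by (apply (T_in_N N Phi XJc XJ HXJ0 HdXJ i); auto; unfold i; lia).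
    set (d := fun j kk => dp j kk - s j kk).
    assert (Hd : nullspace N Phi XJc XJ d).
    { split.
      - intros j kk Hj. unfold d. rewrite (proj1 Hdp), (proj1 Hsn) by auto; ring.
      - intros v1 q qd.
        rewrite (sumR_ext N _ (fun j => quad6 (vel Phi XJc XJ v1 q qd (S j)) (hat (dp (S j)))
              + (-1) * quad6 (vel Phi XJc XJ v1 q qd (S j)) (hat (s (S j))))).
        + rewrite sumR_plus, sumR_scal, (proj2 Hdp), (proj2 Hsn). ring.
        + intros j _. rewrite <- quad_lin. apply quad6_extM. intros a b _ _.
          rewrite (hat_ext (d (S j)) (fun k => 1 * dp (S j) k + (-1) * s (S j) k)) by (intros; unfold d; ring).
          rewrite hat_lin. ring. }
    assert (Hdz : forall j, (S n < j)%nat -> forall kk, d j kk = 0).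
    { intros j Hj kk. unfold d. destruct (Nat.eq_dec j i) as [E|E].
      - rewrite E, Hs_i; ring.
      - rewrite Hs_o by lia. rewrite Hz by (unfold i in *; lia). ring. }
    destruct (IHn ltac:(lia) d Hd Hdz) as [t' [HT' [Ht'z Ht'sum]]].
    exists (fun i' => if Nat.eqb i' i then s else t' i').
    split; [|split].
    + intros i' Hi'. destruct (Nat.eqb_spec i' i) as [E|E]; [rewrite E; auto|auto].
    + intros i' Hi' j kk. destruct (Nat.eqb_spec i' i) as [E|E]; [unfold i in *; lia|]. apply Ht'z; lia.
    + intros j kk.
      rewrite (sumR_ext (N - 1) _ (fun m => t' (m + 2)%nat j kk + (if Nat.eqb m n then s j kk else 0))).
      * rewrite sumR_plus, sumR_ind by (unfold i in *; lia). rewrite <- Ht'sum. unfold d; ring.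
      * intros m Hm. destruct (Nat.eqb_spec (m + 2) i) as [E|E]; destruct (Nat.eqb_spec m n) as [E'|E'];
          unfold i in *; try lia.
        -- rewrite E. rewrite Ht'z by lia. ring.
        -- ring.
Qed.

Lemma direct N Phi XJc (t : nat -> param) :
  (forall i, (2 <= i <= N)%nat -> inertia_transfer N Phi XJc i (t i)) ->
  (forall j k, sumR (N - 1) (fun m => t (m + 2)%nat j k) = 0) ->
  forall i, (2 <= i <= N)%nat -> forall j k, t i j k = 0.
Proof.
  intros HT Hsum.
  assert (core : forall i, (2 <= i <= N)%nat -> (forall i', (i < i' <= N)%nat -> forall j k, t i' j k = 0) ->
     forall j k, t i j k = 0).
  { intros i Hi IH.
    destruct (HT i Hi) as [Hp [Htr [_ [_ Hoth]]]].
    assert (Hii : forall k, t i i k = 0).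
    { intros k. specialize (Hsum i k).
      rewrite (sumR_ext (N - 1) _ (fun m => if Nat.eqb m (i - 2) then t i i k else 0)) in Hsum.
      - rewrite sumR_ind in Hsum by lia. auto.
      - intros m Hm. destruct (Nat.eqb_spec m (i - 2)).
        + replace (m + 2)%nat with i by lia. reflexivity.
        + destruct (Nat.lt_ge_cases i (m + 2)).
          * rewrite IH by lia. reflexivity.
          * destruct (HT (m + 2)%nat ltac:(lia)) as [Hp' [_ [_ [_ Hoth']]]].
            apply (param_zero_of_hat (t (m + 2)%nat)); [intros; apply Hp'; lia| apply Hoth'; lia]. }
    intros j k. destruct (Nat.eq_dec j i) as [E|E]; [rewrite E; auto|].
    destruct (Nat.eq_dec j (i - 1)) as [E'|E'].
    - rewrite E'. apply param_zero_of_hat; [intros; apply Hp; lia|].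
      intros a b Ha Hb. rewrite Htr by auto. unfold mopp, mzero. rewrite mmul_zero_mid; [ring|].
      intros; apply hat_zero; auto.
    - apply param_zero_of_hat; [intros; apply Hp; lia| apply Hoth; auto]. }
  assert (Hd : forall d i, (2 <= i <= N)%nat -> (N - i <= d)%nat -> forall j k, t i j k = 0).
  { induction d; intros i Hi Hd; apply core; auto; intros i' Hi'; [lia| apply IHd; lia]. }
  intros i Hi. apply (Hd (N - i)%nat); auto.
Qed.

Theorem theorem1 (N : nat) (Phi : nat -> vec) (XJc : nat -> mat) (XJ : nat -> R -> mat)
  (HXc : forall i, (2 <= i <= N)%nat -> is_spatial_transform (XJc i))
  (HXJ : forall i q, (2 <= i <= N)%nat -> is_spatial_transform (XJ i q))
  (HXJ0 : forall i, (2 <= i <= N)%nat -> meq 6 6 (XJ i 0) ident)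
  (HdXJ : forall i q a b, (2 <= i <= N)%nat -> (a < 6)%nat -> (b < 6)%nat ->
     derivable_pt_lim (fun s => XJ i s a b) q
       (mopp (mmul 6 (scross (Phi i)) (XJ i q)) a b)) :
  is_direct_sum N (nullspace N Phi XJc XJ) (fun i => inertia_transfer N Phi XJc i).
Proof.
  split.
  - intros dp Hp. split.
    + intros Hn. destruct N as [|N'].
      * exists (fun _ _ _ => 0). split; [intros; lia|]. intros j k. simpl. apply Hp. lia.
      * destruct (decomp (S N') Phi XJc XJ HXc HXJ0 HdXJ N' ltac:(lia) dp Hn (fun j (Hj : (S N' < j)%nat) kk => Hp j kk ltac:(lia)))
          as [t [H1 [_ H3]]]. exists t; auto.
    + intros [t [HT Hsum]]. split; auto. intros v1 q qd.
      rewrite (sumR_ext N _ (fun j => sumR (N - 1) (fun m => quad6 (vel Phi XJc XJ v1 q qd (S j)) (hat (t (m + 2)%nat (S j)))))).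
      * rewrite sumR_swap. apply sumR_zero. intros m Hm.
        apply (proj2 (T_in_N N Phi XJc XJ HXJ0 HdXJ (m + 2)%nat (t (m + 2)%nat) ltac:(lia) (HT (m + 2)%nat ltac:(lia)))).
      * intros j _. rewrite <- (quad_sum _ (N - 1) (fun m => hat (t (m + 2)%nat (S j)))). apply quad6_extM.
        intros a b _ _. apply hat_sum. intros k; apply Hsum.
  - apply direct.
Qed.
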